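(* Let $\mathcal B$ be any board, let $q'>q>0$ be integers, and let $\mathsf P$ and $\mathsf P'$ be rider pieces such that every basic move of $\mathsf P$ is also a basic move of $\mathsf P'$. Then $D_q(\mathsf P)\mid D_{q'}(\mathsf P)$ and $D_q(\mathsf P)\mid D_q(\mathsf P')$.
   Context: A board $\mathcal B$ is a convex polygon in $\mathbb R^2$ with rational corners. A rider piece $\mathsf P$ has a finite set $\mathcal M$ of basic moves: nonzero integer vectors $(c,d)$ with $\gcd(c,d)=1$, no two parallel. For $q$ pieces, the move arrangement $\mathcal A^q_{\mathsf P}$ in $\mathbb R^{2q}$ consists of the hyperplanes $\mathcal H^{d/c}_{ij}=\{(z_1,\dots,z_q):(z_j-z_i)\cdot(d,-c)=0\}$, $1\le i<j\le q$, $(c,d)\in\mathcal M$. A vertex of the inside-out polytope $(\mathcal B^q,\mathcal A^q_{\mathsf P})$ is a point of $\mathcal B^q$ that is the unique point of an intersection of some hyperplanes of $\mathcal A^q_{\mathsf P}$ and some affine hulls of facets of $\mathcal B^q$. The denominator $D_q(\mathsf P)=D(\mathcal B^q,\mathcal A^q_{\mathsf P})$ is the least common multiple of the least common denominators of the coordinates of all such vertices. *)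

(* Defs.v *)
From Stdlib Require Import ClassicalEpsilon.
From mathcomp Require Import all_boot all_order all_algebra.

Set Implicit Arguments.
Unset Strict Implicit.
Unset Printing Implicit Defensive.

Import Order.TTheory GRing.Theory Num.Theory.
Local Open Scope ring_scope.

Definition pt2 := (rat * rat)%type.
Definition cross (u v : pt2) : rat := u.1 * v.2 - u.2 * v.1.
Definition psub (u v : pt2) : pt2 := (u.1 - v.1, u.2 - v.2).

(* A board is given by the list cs of its corners in counterclockwise order
   (indices taken cyclically). *)
Definition corner (cs : seq pt2) (k : nat) : pt2 := nth (0, 0) cs (k %% size cs).
Definition edge_dir (cs : seq pt2) (k : nat) : pt2 :=
  psub (corner cs k.+1) (corner cs k).

(* cs lists the corners of a (2-dimensional) convex polygon counterclockwise:
   at least 3 corners, and every corner not on edge k lies strictly to the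
   left of the line through edge k. *)
Definition is_board (cs : seq pt2) : Prop :=
  (3 <= size cs)%N /\
  forall k j, (k < size cs)%N -> (j < size cs)%N -> j <> k ->
    j <> (k.+1 %% size cs)%N ->
    0 < cross (edge_dir cs k) (psub (nth (0, 0) cs j) (corner cs k)).

Definition in_board (cs : seq pt2) (x : pt2) : Prop :=
  forall k, (k < size cs)%N -> 0 <= cross (edge_dir cs k) (psub x (corner cs k)).

Definition on_edge_line (cs : seq pt2) (k : nat) (x : pt2) : Prop :=
  cross (edge_dir cs k) (psub x (corner cs k)) = 0.

Definition rider (M : seq (int * int)) : Prop :=
  uniq M /\
  (forall m, m \in M -> m != (0, 0) /\ gcdz m.1 m.2 = 1) /\
  (forall m m', m \in M -> m' \in M -> m != m' -> m.1 * m'.2 != m.2 * m'.1).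

Definition config (q : nat) := 'I_q -> pt2.

Definition in_boardq (cs : seq pt2) (q : nat) (z : config q) : Prop :=
  forall i, in_board cs (z i).

Definition move_hyp (q : nat) (m : int * int) (i j : 'I_q) (z : config q) : Prop :=
  ((z j).1 - (z i).1) * m.2%:~R - ((z j).2 - (z i).2) * m.1%:~R = 0.

(* Index type of all hyperplanes of the move arrangement (i < j, move m)
   and all facet affine hulls of B^q (coordinate i lies on edge line k). *)
Definition con (q : nat) (M : seq (int * int)) (n : nat) : finType :=
  (({p : 'I_q * 'I_q | (p.1 < p.2)%N} * seq_sub M) + ('I_q * 'I_n))%type.

Definition sat (cs : seq pt2) (M : seq (int * int)) (q : nat)
  (c : con q M (size cs)) (z : config q) : Prop :=
  match c with
  | inl (p, m) => move_hyp (ssval m) (sval p).1 (sval p).2 z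
  | inr (i, k) => on_edge_line cs k (z i)
  end.

(* z is a vertex of the inside-out polytope (B^q, A^q_P) cut out by the
   family S of hyperplanes / facet hulls: z in B^q and z is the unique point
   of the intersection of the members of S. *)
Definition vertex_of (cs : seq pt2) (M : seq (int * int)) (q : nat)
  (S : {set con q M (size cs)}) (z : config q) : Prop :=
  in_boardq cs z /\
  (forall c, c \in S -> sat c z) /\
  (forall w : config q, (forall c, c \in S -> sat c w) -> forall i, w i = z i).

Definition is_vertex (cs : seq pt2) (M : seq (int * int)) (q : nat) (z : config q) :=
  exists S : {set con q M (size cs)}, vertex_of S z.

Definition lcd (q : nat) (z : config q) : nat :=
  \big[lcmn/1%N]_(i < q) lcmn `|denq (z i).1|%N `|denq (z i).2|%N.

Definition vert_lcd (cs : seq pt2) (M : seq (int * int)) (q : nat)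
  (S : {set con q M (size cs)}) : nat :=
  match excluded_middle_informative (exists z : config q, vertex_of S z) with
  | left h => lcd (proj1_sig (constructive_indefinite_description _ h))
  | right _ => 1%N
  end.

(* Denominator D_q(P) = D(B^q, A^q_P): lcm of the lcds of all vertices
   (each vertex arises from some family S, and each S yields at most one). *)
Definition Denom (cs : seq pt2) (M : seq (int * int)) (q : nat) : nat :=
  \big[lcmn/1%N]_(S : {set con q M (size cs)}) vert_lcd S.

(* Main.v *)
Require Import Defs.
From mathcomp Require Import all_boot all_order all_algebra.
From Stdlib Require Import ClassicalEpsilon.
From mathcomp Require Import ring.

Set Implicit Arguments.
Unset Strict Implicit.
Unset Printing Implicit Defensive.
Import Order.TTheory GRing.Theory Num.Theory.

Lemma vert_lcd_eq cs M q (S : {set con q M (size cs)}) z :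
  vertex_of S z -> vert_lcd S = lcd z.
Proof.
move=> hz; rewrite /vert_lcd; case: excluded_middle_informative => [h|[]];
  last by exists z.
case: constructive_indefinite_description => z0 /= hz0.
apply: eq_bigr => i _.
by rewrite ((proj2 (proj2 hz)) z0 (proj1 (proj2 hz0)) i).
Qed.

Lemma Denom_dvd cs M M' q q' :
  (forall (S : {set con q M (size cs)}) z, vertex_of S z ->
     exists (S' : {set con q' M' (size cs)}) z', vertex_of S' z' /\ (lcd z %| lcd z')%N) ->
  (Denom cs M q %| Denom cs M' q')%N.
Proof.
move=> H; apply/dvdn_biglcmP => S _.
rewrite /vert_lcd; case: excluded_middle_informative => [h|_]; last exact: dvd1n.
case: constructive_indefinite_description => z hz /=.
have [S' [z' [hv hd]]] := H S z hz.
apply: dvdn_trans hd _.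
rewrite -(vert_lcd_eq hv).
exact: (biglcmn_sup S').
Qed.

Lemma sat_ext cs M q (c : con q M (size cs)) (z1 z2 : config q) :
  (forall i, z1 i = z2 i) -> sat c z1 -> sat c z2.
Proof.
move=> E; case: c => [[p m]|[i k]] /=; rewrite /move_hyp ?E //.
Qed.

Section Sub.
Variables (cs : seq pt2) (M M' : seq (int * int)) (q : nat).
Hypothesis hsub : {subset M <= M'}.

Definition liftM (c : con q M (size cs)) : con q M' (size cs) :=
  match c with
  | inl (p, m) => inl (p, SeqSub (hsub (ssvalP m)))
  | inr ik => inr ik
  end.

Lemma sub_step (S : {set con q M (size cs)}) z : vertex_of S z ->
  exists (S' : {set con q M' (size cs)}) z', vertex_of S' z' /\ (lcd z %| lcd z')%N.
Proof.
move=> [hb [hs hu]]; exists (liftM @: S), z; split=> //; split=> //; split.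
  move=> c' /imsetP [c cS ->]; have := hs c cS.
  by case: c {cS} => [[p m]|[i k]].
move=> w hw; apply: hu => c cS.
have := hw _ (imset_f liftM cS).
by case: c {cS} => [[p m]|[i k]].
Qed.
End Sub.

Section Corner.
Local Open Scope ring_scope.
Variable cs : seq pt2.
Hypothesis hB : is_board cs.

Let n := size cs.
Lemma n3 : (3 <= n)%N. Proof. by case: hB. Qed.

Lemma corner_small k : (k < n)%N -> corner cs k = nth (0, 0) cs k.
Proof. by move=> h; rewrite /corner modn_small. Qed.

Lemma corner_n : corner cs n = corner cs 0.
Proof. by rewrite /corner modnn mod0n. Qed.

Lemma cross_self u : cross u u = 0.
Proof. by rewrite /cross mulrC subrr. Qed.

Lemma psub_self u : psub u u = (0, 0).
Proof. by rewrite /psub !subrr. Qed.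

Lemma cross_0 u : cross u (0, 0) = 0.
Proof. by rewrite /cross /= !mulr0 subrr. Qed.

Lemma corner0_in : in_board cs (corner cs 0).
Proof.
move=> k hk.
have n3' := n3.
case: (eqVneq k 0%N) => [->|k0]; first by rewrite psub_self cross_0.
case: (eqVneq k n.-1) => [kl|kl].
  rewrite kl -corner_n.
  have -> : n = n.-1.+1 by rewrite prednK //; apply: leq_trans n3'.
  by rewrite -/(edge_dir cs n.-1) cross_self.
apply/ltW.
have h0 : (0 < n)%N by apply: leq_trans n3'.
have h1 : 0%N <> k by move=> h; rewrite h eqxx in k0.
have h2 : 0%N <> (k.+1 %% n)%N.
  rewrite modn_small; first by [].
  move: hk kl; rewrite -/n; case: (n) => //= m hk kl.
  by rewrite ltn_neqAle kl.
have := (proj2 hB) k 0%N hk h0 h1 h2.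
by rewrite (corner_small h0).
Qed.

Lemma corner0_unique x :
  on_edge_line cs 0 x -> on_edge_line cs n.-1 x -> x = corner cs 0.
Proof.
have n3' := n3.
have nS : n = n.-1.+1 by rewrite prednK //; apply: leq_trans n3'.
have hl : (n.-1 < n)%N by rewrite {2}nS.
have h1 : (1 < n)%N by apply: leq_trans n3'.
have hne1 : 1%N <> n.-1.
  by move=> h; move: n3'; rewrite -/n nS -h.
have hne2 : 1%N <> (n.-1.+1 %% n)%N by rewrite -nS modnn.
have := (proj2 hB) n.-1 1%N hl h1 hne1 hne2.
rewrite -(corner_small h1).
rewrite /on_edge_line /edge_dir -nS corner_n.
move: (corner cs 0) (corner cs 1) (corner cs n.-1) => [a1 a2] [b1 b2] [c1 c2].
case: x => x1 x2; rewrite /cross /psub /= => hD E1 E2.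
set D := (a1 - c1) * (b2 - c2) - (a2 - c2) * (b1 - c1).
have Dn : D != 0 by rewrite /D gt_eqF.
have k1 : D * (x1 - a1) = 0.
  rewrite -[RHS](_ : -(a1 - c1) * ((b1 - a1) * (x2 - a2) - (b2 - a2) * (x1 - a1))
     + (b1 - a1) * ((a1 - c1) * (x2 - c2) - (a2 - c2) * (x1 - c1)) = 0).
    rewrite /D; ring.
  by rewrite E1 E2; ring.
have k2 : D * (x2 - a2) = 0.
  rewrite -[RHS](_ : -(a2 - c2) * ((b1 - a1) * (x2 - a2) - (b2 - a2) * (x1 - a1))
     + (b2 - a2) * ((a1 - c1) * (x2 - c2) - (a2 - c2) * (x1 - c1)) = 0).
    rewrite /D; ring.
  by rewrite E1 E2; ring.
move/eqP: k1; rewrite mulf_eq0 (negbTE Dn) subr_eq0 /= => /eqP ->.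
move/eqP: k2; rewrite mulf_eq0 (negbTE Dn) subr_eq0 /= => /eqP ->.
by [].
Qed.
Lemma corner0_on0 : on_edge_line cs 0 (corner cs 0).
Proof. by rewrite /on_edge_line psub_self cross_0. Qed.

Lemma corner0_onl : on_edge_line cs n.-1 (corner cs 0).
Proof.
have n3' := n3.
have nS : n = n.-1.+1 by rewrite prednK //; apply: leq_trans n3'.
rewrite /on_edge_line -corner_n {2}nS.
by rewrite -/(edge_dir cs n.-1) cross_self.
Qed.
End Corner.

Section Widen.
Variables (cs : seq pt2) (M : seq (int * int)) (q q' : nat).
Hypothesis hB : is_board cs.
Hypothesis hqq : (q <= q')%N.

Let w (i : 'I_q) : 'I_q' := widen_ord hqq i.

Definition liftQ (c : con q M (size cs)) : con q' M (size cs) :=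
  match c with
  | inl (p, m) => inl (exist (fun p : 'I_q' * 'I_q' => (p.1 < p.2)%N)
                        (w (sval p).1, w (sval p).2) (proj2_sig p), m)
  | inr (i, k) => inr (w i, k)
  end.

Lemma liftQ_sat c (z : config q') : sat (liftQ c) z <-> sat c (fun i => z (w i)).
Proof. by case: c => [[p m]|[i k]]. Qed.

Let n := size cs.
Let h0 : (0 < n)%N. Proof. by case: hB => h _; apply: leq_trans h. Qed.
Let hl : (n.-1 < n)%N. Proof. by rewrite prednK. Qed.
Let k0 : 'I_n := Ordinal h0.
Let kl : 'I_n := Ordinal hl.

Definition extras : {set con q' M n} :=
  [set c : con q' M n | match c with inr (j, k) => (q <= (j : 'I_q'))%N && ((k == k0) || (k == kl))
           | _ => false end].

Lemma widen_step (S : {set con q M (size cs)}) z : vertex_of S z ->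
  exists (S' : {set con q' M (size cs)}) z', vertex_of S' z' /\ (lcd z %| lcd z')%N.
Proof.
move=> [hb [hs hu]].
pose z' (j : 'I_q') : pt2 :=
  if insub (val j) is Some i then z i else corner cs 0.
have zw : forall i, z' (w i) = z i.
  move=> i; rewrite /z'; case: insubP => [i' _ hv|]; last by rewrite /= ltn_ord.
  by congr z; apply: val_inj.
have zq : forall j : 'I_q', (q <= j)%N -> z' j = corner cs 0.
  by move=> j hj; rewrite /z'; case: insubP => // i' /=; rewrite ltnNge hj.
exists ((liftQ @: S) :|: extras), z'; split; last first.
  apply/dvdn_biglcmP => i _; apply: (biglcmn_sup (w i)) => //.
  by rewrite zw.
split; [|split].
- move=> j; rewrite /z'; case: insubP => [i' _ _|_]; first exact: hb.
  exact: corner0_in.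
- move=> c; rewrite inE => /orP [/imsetP [c0 c0S ->]|].
    apply/liftQ_sat; apply: (sat_ext (z1 := z)); first by move=> i; rewrite zw.
    exact: hs.
  rewrite inE; case: c => [//|[j k]] /andP [hj hk] /=.
  rewrite (zq j hj).
  by case/orP: hk => /eqP ->; [exact: corner0_on0 | exact: corner0_onl].
- move=> v hv j; case: (ltnP j q) => hj.
    have -> : j = w (Ordinal hj) by apply: val_inj.
    rewrite zw; apply: (hu (fun i => v (w i))) => c cS.
    by apply/liftQ_sat; apply: hv; rewrite in_setU imset_f.
  rewrite zq //; apply: (corner0_unique hB).
    have := hv (inr (j, k0)); apply.
    by rewrite in_setU; apply/orP; right; rewrite inE hj eqxx.
  have := hv (inr (j, kl)); apply.
  by rewrite in_setU; apply/orP; right; rewrite inE hj eqxx orbT.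
Qed.
End Widen.

Theorem proposition3p2 (cs : seq (rat * rat)) (M M' : seq (int * int))
  (q q' : nat) :
  is_board cs -> rider M -> rider M' -> {subset M <= M'} ->
  (0 < q)%N -> (q < q')%N ->
  (Denom cs M q %| Denom cs M q')%N /\ (Denom cs M q %| Denom cs M' q)%N.
Proof.
move=> hB _ _ hs _ hq; split; apply: Denom_dvd.
  exact: (widen_step hB (ltnW hq)).
exact: sub_step.
Qed.
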